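(* Let $\mathcal{F},\mathcal{G}:\mathbf{Sets}\times\mathbf{Sets}\to\mathbf{Sets}$ be functors that preserve injections and preserve pullbacks along injective morphisms, and let $\mathcal{GF}:\mathbf{Sets}\times\mathbf{Sets}\to\mathbf{Sets}\times\mathbf{Sets}$ be $\mathcal{GF}(N,E)=(\mathcal{F}(N,E),\mathcal{G}(N,E))$. Let $\mathcal{M}$ be the class of morphisms $\langle f_N,f_E\rangle$ of $\mathcal{GF}$-coalgebras with $f_N$ and $f_E$ injective. Then $(\mathbf{Coalg}_{\mathcal{GF}},\mathcal{M})$ is an $\mathcal{M}$-adhesive category.
   Context: A $\mathcal{GF}$-coalgebra (coalgebraic graph) is $(N,E)$ with functions $c:N\to\mathcal{F}(N,E)$ and $st:E\to\mathcal{G}(N,E)$; morphisms are pairs $(f_N,f_E)$ with $\mathcal{F}(f_N,f_E)\circ c_1=c_2\circ f_N$ and $\mathcal{G}(f_N,f_E)\circ st_1=st_2\circ f_E$. A functor on $\mathbf{Sets}\times\mathbf{Sets}$ preserves injections if it maps componentwise injective pairs to injective maps, and preserves pullbacks along injective morphisms if it maps every pullback square (computed componentwise) over a cospan one of whose legs is componentwise injective to a pullback. A pair $(\mathbf{C},\mathcal{M})$ with $\mathcal{M}$ a class of monomorphisms is $\mathcal{M}$-adhesive if $\mathcal{M}$ contains identities and is closed under composition, pushouts and pullbacks along $\mathcal{M}$-morphisms exist and $\mathcal{M}$ is stable under them, and pushouts along $\mathcal{M}$-morphisms are vertical weak van Kampen squares (for any commutative cube with such a pushout as bottom, pullbacks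 as back faces and all vertical morphisms in $\mathcal{M}$, the top face is a pushout iff the front faces are pullbacks). *)

(* Defs.v *)
Definition injective {A B : Type} (f : A -> B) : Prop :=
  forall x y, f x = f y -> x = y.

Definition isPullbackSet {P X Y Z : Type}
  (p1 : P -> X) (p2 : P -> Y) (g1 : X -> Z) (g2 : Y -> Z) : Prop :=
  (forall x, g1 (p1 x) = g2 (p2 x)) /\
  forall (Q : Type) (q1 : Q -> X) (q2 : Q -> Y),
    (forall x, g1 (q1 x) = g2 (q2 x)) ->
    exists u : Q -> P,
      (forall x, p1 (u x) = q1 x) /\ (forall x, p2 (u x) = q2 x) /\
      forall u' : Q -> P,
        (forall x, p1 (u' x) = q1 x) -> (forall x, p2 (u' x) = q2 x) ->
        forall x, u' x = u x.

Record BiFunctor := {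
  ob :> Type -> Type -> Type;
  fmap : forall {A B C D : Type}, (A -> C) -> (B -> D) -> ob A B -> ob C D;
  fmap_id : forall (A B : Type) (x : ob A B), fmap (fun a => a) (fun b => b) x = x;
  fmap_comp : forall (A B C D E H : Type) (f : A -> C) (g : B -> D)
                (f' : C -> E) (g' : D -> H) (x : ob A B),
      fmap (fun a => f' (f a)) (fun b => g' (g b)) x = fmap f' g' (fmap f g x)
}.
Arguments fmap _ {A B C D} _ _ _.

Definition preserves_injections (F : BiFunctor) : Prop :=
  forall (A B C D : Type) (f : A -> C) (g : B -> D),
    injective f -> injective g -> injective (fmap F f g).

Definition preserves_pullbacks_along_injections (F : BiFunctor) : Prop :=
  forall (P1 P2 X1 X2 Y1 Y2 Z1 Z2 : Type)
    (p11 : P1 -> X1) (p12 : P2 -> X2) (p21 : P1 -> Y1) (p22 : P2 -> Y2)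
    (g11 : X1 -> Z1) (g12 : X2 -> Z2) (g21 : Y1 -> Z1) (g22 : Y2 -> Z2),
    isPullbackSet p11 p21 g11 g21 ->
    isPullbackSet p12 p22 g12 g22 ->
    ((injective g11 /\ injective g12) \/ (injective g21 /\ injective g22)) ->
    isPullbackSet (fmap F p11 p12) (fmap F p21 p22)
                  (fmap F g11 g12) (fmap F g21 g22).

Section Coalgebras.
Variables (F G : BiFunctor).

Record Coalg := {
  Nd : Type;
  Ed : Type;
  cmap : Nd -> F Nd Ed;
  stmap : Ed -> G Nd Ed
}.

Record Hom (X Y : Coalg) := {
  hN : Nd X -> Nd Y;
  hE : Ed X -> Ed Y;
  hom_c : forall n, fmap F hN hE (cmap X n) = cmap Y (hN n);
  hom_st : forall e, fmap G hN hE (stmap X e) = stmap Y (hE e)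
}.
Arguments hN {X Y} _ _ : rename.
Arguments hE {X Y} _ _ : rename.

Definition heq {X Y : Coalg} (f g : Hom X Y) : Prop :=
  (forall n, hN f n = hN g n) /\ (forall e, hE f e = hE g e).

Program Definition hid (X : Coalg) : Hom X X :=
  {| hN := fun n => n; hE := fun e => e |}.
Next Obligation. intros; apply fmap_id. Qed.
Next Obligation. intros; apply fmap_id. Qed.

Program Definition hcomp {X Y Z : Coalg} (g : Hom Y Z) (f : Hom X Y) : Hom X Z :=
  {| hN := fun n => hN g (hN f n); hE := fun e => hE g (hE f e) |}.
Next Obligation.
  intros; rewrite fmap_comp, !hom_c. reflexivity. Qed.
Next Obligation.
  intros; rewrite fmap_comp, !hom_st. reflexivity. Qed.

Definition commutes {P X Y Z : Coalg}
  (p1 : Hom P X) (p2 : Hom P Y) (g1 : Hom X Z) (g2 : Hom Y Z) : Prop :=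
  heq (hcomp g1 p1) (hcomp g2 p2).

Definition isPullback {P X Y Z : Coalg}
  (p1 : Hom P X) (p2 : Hom P Y) (g1 : Hom X Z) (g2 : Hom Y Z) : Prop :=
  commutes p1 p2 g1 g2 /\
  forall (Q : Coalg) (q1 : Hom Q X) (q2 : Hom Q Y),
    commutes q1 q2 g1 g2 ->
    exists u : Hom Q P,
      heq (hcomp p1 u) q1 /\ heq (hcomp p2 u) q2 /\
      forall u' : Hom Q P,
        heq (hcomp p1 u') q1 -> heq (hcomp p2 u') q2 -> heq u' u.

Definition isPushout {A B C D : Coalg}
  (m : Hom A B) (f : Hom A C) (g : Hom B D) (n : Hom C D) : Prop :=
  commutes m f g n /\
  forall (Q : Coalg) (u : Hom B Q) (v : Hom C Q),
    commutes m f u v ->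
    exists w : Hom D Q,
      heq (hcomp w g) u /\ heq (hcomp w n) v /\
      forall w' : Hom D Q,
        heq (hcomp w' g) u -> heq (hcomp w' n) v -> heq w' w.

Definition isMono {X Y : Coalg} (m : Hom X Y) : Prop :=
  forall (Q : Coalg) (u v : Hom Q X), heq (hcomp m u) (hcomp m v) -> heq u v.

Definition MorClass := forall X Y : Coalg, Hom X Y -> Prop.

Definition Minj : MorClass :=
  fun X Y f => injective (hN f) /\ injective (hE f).

(* top:    A' --m'--> B'        bottom:  A --m--> B
             |f'        |g'                |f       |g
             C' --n'--> D'                 C --n--> D
     vertical: a : A' -> A, b : B' -> B, c : C' -> C, d : D' -> D
     back faces : (A',B',A,B) and (A',C',A,C)
     front faces: (B',D',B,D) and (C',D',C,D)                   *)
Definition vertical_weak_VK (M : MorClass) {A B C D : Coalg}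
  (m : Hom A B) (f : Hom A C) (g : Hom B D) (n : Hom C D) : Prop :=
  forall (A' B' C' D' : Coalg)
    (m' : Hom A' B') (f' : Hom A' C') (g' : Hom B' D') (n' : Hom C' D')
    (a : Hom A' A) (b : Hom B' B) (c : Hom C' C) (d : Hom D' D),
    commutes m' f' g' n' ->
    commutes m' a b m ->
    commutes f' a c f ->
    commutes g' b d g ->
    commutes n' c d n ->
    M _ _ a -> M _ _ b -> M _ _ c -> M _ _ d ->
    isPullback m' a b m ->
    isPullback f' a c f ->
    (isPushout m' f' g' n' <-> (isPullback g' b d g /\ isPullback n' c d n)).

Definition M_adhesive (M : MorClass) : Prop :=
  (forall X Y (h : Hom X Y), M X Y h -> isMono h) /\
  (forall X, M X X (hid X)) /\
  (forall X Y Z (f : Hom X Y) (g : Hom Y Z), M _ _ f -> M _ _ g -> M _ _ (hcomp g f)) /\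
  (forall X Y Z (g1 : Hom X Z) (g2 : Hom Y Z), M _ _ g1 ->
     exists (P : Coalg) (p1 : Hom P X) (p2 : Hom P Y), isPullback p1 p2 g1 g2) /\
  (forall P X Y Z (p1 : Hom P X) (p2 : Hom P Y) (g1 : Hom X Z) (g2 : Hom Y Z),
     isPullback p1 p2 g1 g2 -> M _ _ g1 -> M _ _ p2) /\
  (forall A B C (m : Hom A B) (f : Hom A C), M _ _ m ->
     exists (D : Coalg) (g : Hom B D) (n : Hom C D), isPushout m f g n) /\
  (forall A B C D (m : Hom A B) (f : Hom A C) (g : Hom B D) (n : Hom C D),
     isPushout m f g n -> M _ _ m -> M _ _ n) /\
  (forall A B C D (m : Hom A B) (f : Hom A C) (g : Hom B D) (n : Hom C D),
     isPushout m f g n -> M _ _ m -> vertical_weak_VK M m f g n).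

End Coalgebras.

(* Main.v *)
Require Import Defs.
From Stdlib Require Import FunctionalExtensionality ProofIrrelevance ClassicalEpsilon Classical.
Arguments hN {F G X Y} _ _.
Arguments hE {F G X Y} _ _.
Arguments hom_c {F G X Y} _ _.
Arguments hom_st {F G X Y} _ _.
Arguments cmap {F G} _ _.
Arguments stmap {F G} _ _.
Arguments Nd {F G} _.
Arguments Ed {F G} _.

Lemma pbs_exists {P X Y Z : Type} (p1 : P -> X) (p2 : P -> Y) (g1 : X -> Z) (g2 : Y -> Z) :
  isPullbackSet p1 p2 g1 g2 -> forall x y, g1 x = g2 y -> exists p, p1 p = x /\ p2 p = y.
Proof.
  intros [_ H] x y e.
  destruct (H unit (fun _ => x) (fun _ => y) (fun _ => e)) as [u [h1 [h2 _]]].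
  exists (u tt); auto.
Qed.

Lemma pbs_unique {P X Y Z : Type} (p1 : P -> X) (p2 : P -> Y) (g1 : X -> Z) (g2 : Y -> Z) :
  isPullbackSet p1 p2 g1 g2 -> forall p q, p1 p = p1 q -> p2 p = p2 q -> p = q.
Proof.
  intros [Hc H] p q e1 e2.
  destruct (H unit (fun _ => p1 p) (fun _ => p2 p) (fun _ => Hc p)) as [u [h1 [h2 U]]].
  rewrite (U (fun _ => p) (fun _ => eq_refl) (fun _ => eq_refl) tt).
  symmetry; apply (U (fun _ => q)); intros; auto.
Qed.

Lemma pbs_intro {P X Y Z : Type} (p1 : P -> X) (p2 : P -> Y) (g1 : X -> Z) (g2 : Y -> Z) :
  (forall x, g1 (p1 x) = g2 (p2 x)) ->
  (forall x y, g1 x = g2 y -> exists p, p1 p = x /\ p2 p = y) ->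
  (forall p q, p1 p = p1 q -> p2 p = p2 q -> p = q) -> isPullbackSet p1 p2 g1 g2.
Proof.
  intros Hc Hex Hu. split; auto.
  intros Q q1 q2 Hq.
  exists (fun z => proj1_sig (constructive_indefinite_description _ (Hex _ _ (Hq z)))).
  split; [|split].
  - intro z; destruct (constructive_indefinite_description _ _) as [p [e1 e2]]; simpl; auto.
  - intro z; destruct (constructive_indefinite_description _ _) as [p [e1 e2]]; simpl; auto.
  - intros u' h1 h2 z. destruct (constructive_indefinite_description _ _) as [p [e1 e2]]; simpl.
    apply Hu; congruence.
Qed.

Definition PBT {X Y Z : Type} (g1 : X -> Z) (g2 : Y -> Z) : Type :=
  {xy : X * Y | g1 (fst xy) = g2 (snd xy)}.
Definition pi1 {X Y Z : Type} (g1 : X -> Z) (g2 : Y -> Z) (p : PBT g1 g2) : X := fst (proj1_sig p).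
Definition pi2 {X Y Z : Type} (g1 : X -> Z) (g2 : Y -> Z) (p : PBT g1 g2) : Y := snd (proj1_sig p).

Lemma pb_canon {X Y Z : Type} (g1 : X -> Z) (g2 : Y -> Z) :
  isPullbackSet (pi1 g1 g2) (pi2 g1 g2) g1 g2.
Proof.
  apply pbs_intro.
  - intros [[x y] e]; exact e.
  - intros x y e. exists (exist _ (x, y) e); auto.
  - intros [[x y] e] [[x' y'] e'] h1 h2; unfold pi1, pi2 in *; simpl in *; subst.
    f_equal; apply proof_irrelevance.
Qed.

Definition POchar {A B C D : Type} (m : A -> B) (f : A -> C) (g : B -> D) (n : C -> D) : Prop :=
  (forall a, g (m a) = n (f a)) /\ injective n /\
  (forall d, (exists b, g b = d) \/ (exists c, n c = d)) /\
  (forall b c, g b = n c -> exists a, m a = b /\ f a = c) /\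
  (forall b1 b2, g b1 = g b2 -> b1 = b2 \/ exists c, g b1 = n c).

Lemma po_factor {A B C D Q : Type} (m : A -> B) (f : A -> C) (g : B -> D) (n : C -> D)
  (u : B -> Q) (v : C -> Q) :
  POchar m f g n -> (forall a, u (m a) = v (f a)) ->
  {w : D -> Q | (forall b, w (g b) = u b) /\ (forall c, w (n c) = v c)}.
Proof.
  intros [Hc [Hn [Hs [HP HQ]]]] Huv.
  assert (Hbc : forall b c, g b = n c -> u b = v c).
  { intros b c e. destruct (HP b c e) as [a [<- <-]]. apply Huv. }
  assert (Hbb : forall b1 b2, g b1 = g b2 -> u b1 = u b2).
  { intros b1 b2 e. destruct (HQ b1 b2 e) as [->|[c ec]]; auto.
    rewrite (Hbc b1 c ec). symmetry; apply Hbc; congruence. }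
  assert (Hex : forall d, exists q, (exists b, g b = d /\ u b = q) \/ (exists c, n c = d /\ v c = q)).
  { intro d. destruct (Hs d) as [[b eb]|[c ec]]; eauto. }
  exists (fun d => proj1_sig (constructive_indefinite_description _ (Hex d))).
  split.
  - intro b. destruct (constructive_indefinite_description _ _) as [q [[b' [e1 e2]]|[c [e1 e2]]]]; simpl.
    + subst q; apply Hbb; auto.
    + subst q; symmetry; apply Hbc; auto.
  - intro c. destruct (constructive_indefinite_description _ _) as [q [[b' [e1 e2]]|[c' [e1 e2]]]]; simpl.
    + subst q; apply Hbc; auto.
    + subst q; f_equal; apply Hn; auto.
Qed.

Lemma po_unique {A B C D Q : Type} (m : A -> B) (f : A -> C) (g : B -> D) (n : C -> D)
  (w1 w2 : D -> Q) : POchar m f g n ->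
  (forall b, w1 (g b) = w2 (g b)) -> (forall c, w1 (n c) = w2 (n c)) -> forall d, w1 d = w2 d.
Proof.
  intros [_ [_ [Hs _]]] h1 h2 d. destruct (Hs d) as [[b <-]|[c <-]]; auto.
Qed.

Lemma vk_set {A B C D A' B' C' D' : Type} (m:A->B) (f:A->C) (g:B->D) (n:C->D)
 (m':A'->B') (f':A'->C') (g':B'->D') (n':C'->D') (a:A'->A) (b:B'->B) (c:C'->C) (d:D'->D) :
 POchar m f g n -> injective m ->
 (forall x, g' (m' x) = n' (f' x)) ->
 (forall x, b (m' x) = m (a x)) -> (forall x, c (f' x) = f (a x)) ->
 (forall x, d (g' x) = g (b x)) -> (forall x, d (n' x) = n (c x)) ->
 injective a -> injective b -> injective c -> injective d ->
 isPullbackSet m' a b m -> isPullbackSet f' a c f ->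
 (POchar m' f' g' n' <-> (isPullbackSet g' b d g /\ isPullbackSet n' c d n)).
Proof.
  intros PO im ctop cm cf cg cn ia ib ic id PBm PBf.
  destruct PO as [Hc [Hn [Hs [HP HQ]]]].
  assert (HQm : forall y1 y2, g y1 = g y2 -> y1 = y2 \/
            exists a1 a2, y1 = m a1 /\ y2 = m a2 /\ f a1 = f a2).
  { intros y1 y2 e. destruct (HQ y1 y2 e) as [->|[c0 ec]]; auto.
    destruct (HP _ _ ec) as [a1 [e1 e1']]. rewrite e in ec.
    destruct (HP _ _ ec) as [a2 [e2 e2']]. right; exists a1, a2; repeat split; congruence. }
  split.
  - intros [Hc' [Hn' [Hs' [HP' HQ']]]]. split.
    + apply pbs_intro.
      * intro x; apply cg.
      * intros x y e. destruct (Hs' x) as [[b' <-]|[c' <-]].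
        -- rewrite cg in e. destruct (HQm _ _ e) as [<-|[a1 [a2 [e1 [e2 e3]]]]].
           ++ eauto.
           ++ destruct (pbs_exists _ _ _ _ PBm b' a1 e1) as [a'1 [h1 h2]].
              assert (Hx : c (f' a'1) = f a2) by (rewrite cf, h2; auto).
              destruct (pbs_exists _ _ _ _ PBf _ _ Hx) as [a'2 [k1 k2]].
              exists (m' a'2). split.
              ** rewrite ctop, k1, <- ctop, h1; auto.
              ** rewrite cm, k2; auto.
        -- rewrite cn in e. destruct (HP _ _ (eq_sym e)) as [a0 [e1 e2]].
           destruct (pbs_exists _ _ _ _ PBf c' a0 (eq_sym e2)) as [a'0 [h1 h2]].
           exists (m' a'0). split.
           ++ rewrite ctop, h1; auto.
           ++ rewrite cm, h2; auto.
      * intros p q e1 e2. apply ib; auto.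
    + apply pbs_intro.
      * intro x; apply cn.
      * intros x y e. destruct (Hs' x) as [[b' <-]|[c' <-]].
        -- rewrite cg in e. destruct (HP _ _ e) as [a0 [e1 e2]].
           destruct (pbs_exists _ _ _ _ PBm b' a0 (eq_sym e1)) as [a'0 [h1 h2]].
           exists (f' a'0). split.
           ++ rewrite <- ctop, h1; auto.
           ++ rewrite cf, h2; auto.
        -- rewrite cn in e. apply Hn in e. eauto.
      * intros p q e1 e2. apply ic; auto.
  - intros [PBg PBn]. split; [exact ctop|]. split; [|split; [|split]].
    + intros c1 c2 e. apply ic, Hn. rewrite <- !cn, e; auto.
    + intro x. destruct (Hs (d x)) as [[y e]|[y e]].
      * destruct (pbs_exists _ _ _ _ PBg x y (eq_sym e)) as [b' [h1 _]]; eauto.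
      * destruct (pbs_exists _ _ _ _ PBn x y (eq_sym e)) as [c' [h1 _]]; eauto.
    + intros b' c' e. assert (e' : g (b b') = n (c c')) by (rewrite <- cg, <- cn, e; auto).
      destruct (HP _ _ e') as [a0 [e1 e2]].
      destruct (pbs_exists _ _ _ _ PBm b' a0 (eq_sym e1)) as [a' [h1 h2]].
      exists a'. split; auto. apply ic. rewrite cf, h2; auto.
    + intros b1 b2 e. assert (e' : g (b b1) = g (b b2)) by (rewrite <- !cg, e; auto).
      destruct (HQ _ _ e') as [e2|[c0 ec]].
      * left; apply ib; auto.
      * right. rewrite <- cg in ec.
        destruct (pbs_exists _ _ _ _ PBn _ _ ec) as [c' [h1 _]]; eauto.
Qed.

Lemma fmap_ce (H : BiFunctor) {A B C D E K : Type} (f : A -> C) (g : B -> D)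
  (f' : C -> E) (g' : D -> K) (h : A -> E) (k : B -> K) (z : H A B) :
  (forall x, f' (f x) = h x) -> (forall y, g' (g y) = k y) ->
  fmap H f' g' (fmap H f g z) = fmap H h k z.
Proof.
  intros e1 e2.
  assert (E1 : h = fun x => f' (f x)) by (extensionality x; auto).
  assert (E2 : k = fun x => g' (g x)) by (extensionality x; auto).
  subst h k. exact (eq_sym (fmap_comp H _ _ _ _ _ _ f g f' g' z)).
Qed.

Lemma pb_struct (H : BiFunctor) (HP : preserves_pullbacks_along_injections H)
  {NX EX NY EY NZ EZ : Type} (g1N : NX -> NZ) (g1E : EX -> EZ) (g2N : NY -> NZ) (g2E : EY -> EZ)
  (i1 : injective g1N) (i2 : injective g1E) (sx : H NX EX) (sy : H NY EY) :
  fmap H g1N g1E sx = fmap H g2N g2E sy ->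
  { z : H (PBT g1N g2N) (PBT g1E g2E) |
    fmap H (pi1 g1N g2N) (pi1 g1E g2E) z = sx /\ fmap H (pi2 g1N g2N) (pi2 g1E g2E) z = sy }.
Proof.
  intro e. apply constructive_indefinite_description.
  eapply pbs_exists; [| exact e].
  apply HP; [apply pb_canon | apply pb_canon | left; auto].
Qed.


Lemma coalg_pb_of_sets (F G : BiFunctor)
  (HPF : preserves_pullbacks_along_injections F) (HPG : preserves_pullbacks_along_injections G)
  {P X Y Z : Coalg F G} (p1 : Hom F G P X) (p2 : Hom F G P Y) (g1 : Hom F G X Z) (g2 : Hom F G Y Z) :
  injective (hN g1) -> injective (hE g1) ->
  isPullbackSet (hN p1) (hN p2) (hN g1) (hN g2) ->
  isPullbackSet (hE p1) (hE p2) (hE g1) (hE g2) ->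
  isPullback F G p1 p2 g1 g2.
Proof.
  intros i1 i2 PN PE. split.
  - split; intro; simpl; [apply (proj1 PN) | apply (proj1 PE)].
  - intros Q q1 q2 [HqN HqE]. simpl in HqN, HqE.
    destruct (proj2 PN (Nd Q) (hN q1) (hN q2) HqN) as [uN [u1 [u2 uU]]].
    destruct (proj2 PE (Ed Q) (hE q1) (hE q2) HqE) as [uE [v1 [v2 vU]]].
    assert (FP := HPF _ _ _ _ _ _ _ _ (hN p1) (hE p1) (hN p2) (hE p2) (hN g1) (hE g1) (hN g2) (hE g2)
                  PN PE (or_introl (conj i1 i2))).
    assert (GP := HPG _ _ _ _ _ _ _ _ (hN p1) (hE p1) (hN p2) (hE p2) (hN g1) (hE g1) (hN g2) (hE g2)
                  PN PE (or_introl (conj i1 i2))).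
    assert (hc : forall x, fmap F uN uE (cmap Q x) = cmap P (uN x)).
    { intro x. apply (pbs_unique _ _ _ _ FP).
      - rewrite fmap_ce with (h := hN q1) (k := hE q1) by auto.
        rewrite (hom_c q1), (hom_c p1), u1; reflexivity.
      - rewrite fmap_ce with (h := hN q2) (k := hE q2) by auto.
        rewrite (hom_c q2), (hom_c p2), u2; reflexivity. }
    assert (hs : forall x, fmap G uN uE (stmap Q x) = stmap P (uE x)).
    { intro x. apply (pbs_unique _ _ _ _ GP).
      - rewrite fmap_ce with (h := hN q1) (k := hE q1) by auto.
        rewrite (hom_st q1), (hom_st p1), v1; reflexivity.
      - rewrite fmap_ce with (h := hN q2) (k := hE q2) by auto.
        rewrite (hom_st q2), (hom_st p2), v2; reflexivity. }
    exists (Build_Hom F G Q P uN uE hc hs). split; [|split].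
    + split; simpl; auto.
    + split; simpl; auto.
    + intros u' [h1N h1E] [h2N h2E]; simpl in *.
      split; intro z; [apply (uU (hN u')) | apply (vU (hE u'))]; auto.
Qed.

Lemma pb_coh (F G : BiFunctor) {X Y Z : Coalg F G} (g1 : Hom F G X Z) (g2 : Hom F G Y Z)
  (p : PBT (hN g1) (hN g2)) :
  fmap F (hN g1) (hE g1) (cmap X (pi1 _ _ p)) = fmap F (hN g2) (hE g2) (cmap Y (pi2 _ _ p)).
Proof. rewrite (hom_c g1), (hom_c g2). f_equal. destruct p; auto. Qed.

Lemma pb_coh' (F G : BiFunctor) {X Y Z : Coalg F G} (g1 : Hom F G X Z) (g2 : Hom F G Y Z)
  (p : PBT (hE g1) (hE g2)) :
  fmap G (hN g1) (hE g1) (stmap X (pi1 _ _ p)) = fmap G (hN g2) (hE g2) (stmap Y (pi2 _ _ p)).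
Proof. rewrite (hom_st g1), (hom_st g2). f_equal. destruct p; auto. Qed.

Definition pbC (F G : BiFunctor)
  (HPF : preserves_pullbacks_along_injections F) (HPG : preserves_pullbacks_along_injections G)
  {X Y Z : Coalg F G} (g1 : Hom F G X Z) (g2 : Hom F G Y Z)
  (i1 : injective (hN g1)) (i2 : injective (hE g1)) : Coalg F G :=
  Build_Coalg F G (PBT (hN g1) (hN g2)) (PBT (hE g1) (hE g2))
    (fun p => proj1_sig (pb_struct F HPF _ _ _ _ i1 i2 _ _ (pb_coh F G g1 g2 p)))
    (fun p => proj1_sig (pb_struct G HPG _ _ _ _ i1 i2 _ _ (pb_coh' F G g1 g2 p))).

Definition pbP1 (F G : BiFunctor)
  (HPF : preserves_pullbacks_along_injections F) (HPG : preserves_pullbacks_along_injections G)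
  {X Y Z : Coalg F G} (g1 : Hom F G X Z) (g2 : Hom F G Y Z)
  (i1 : injective (hN g1)) (i2 : injective (hE g1)) : Hom F G (pbC F G HPF HPG g1 g2 i1 i2) X.
Proof.
  refine (Build_Hom F G (pbC F G HPF HPG g1 g2 i1 i2) X (pi1 (hN g1) (hN g2)) (pi1 (hE g1) (hE g2)) _ _).
  - intro p. exact (proj1 (proj2_sig (pb_struct F HPF _ _ _ _ i1 i2 _ _ (pb_coh F G g1 g2 p)))).
  - intro p. exact (proj1 (proj2_sig (pb_struct G HPG _ _ _ _ i1 i2 _ _ (pb_coh' F G g1 g2 p)))).
Defined.

Definition pbP2 (F G : BiFunctor)
  (HPF : preserves_pullbacks_along_injections F) (HPG : preserves_pullbacks_along_injections G)
  {X Y Z : Coalg F G} (g1 : Hom F G X Z) (g2 : Hom F G Y Z)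
  (i1 : injective (hN g1)) (i2 : injective (hE g1)) : Hom F G (pbC F G HPF HPG g1 g2 i1 i2) Y.
Proof.
  refine (Build_Hom F G (pbC F G HPF HPG g1 g2 i1 i2) Y (pi2 (hN g1) (hN g2)) (pi2 (hE g1) (hE g2)) _ _).
  - intro p. exact (proj2 (proj2_sig (pb_struct F HPF _ _ _ _ i1 i2 _ _ (pb_coh F G g1 g2 p)))).
  - intro p. exact (proj2 (proj2_sig (pb_struct G HPG _ _ _ _ i1 i2 _ _ (pb_coh' F G g1 g2 p)))).
Defined.

Lemma pbC_pb (F G : BiFunctor)
  (HPF : preserves_pullbacks_along_injections F) (HPG : preserves_pullbacks_along_injections G)
  {X Y Z : Coalg F G} (g1 : Hom F G X Z) (g2 : Hom F G Y Z)
  (i1 : injective (hN g1)) (i2 : injective (hE g1)) :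
  isPullback F G (pbP1 F G HPF HPG g1 g2 i1 i2) (pbP2 F G HPF HPG g1 g2 i1 i2) g1 g2.
Proof.
  apply coalg_pb_of_sets; auto; simpl; apply pb_canon.
Qed.

Lemma sets_of_coalg_pb (F G : BiFunctor)
  (HPF : preserves_pullbacks_along_injections F) (HPG : preserves_pullbacks_along_injections G)
  {P X Y Z : Coalg F G} (p1 : Hom F G P X) (p2 : Hom F G P Y) (g1 : Hom F G X Z) (g2 : Hom F G Y Z) :
  injective (hN g1) -> injective (hE g1) -> isPullback F G p1 p2 g1 g2 ->
  isPullbackSet (hN p1) (hN p2) (hN g1) (hN g2) /\
  isPullbackSet (hE p1) (hE p2) (hE g1) (hE g2).
Proof.
  intros i1 i2 [Hc U].
  pose proof (pbC_pb F G HPF HPG g1 g2 i1 i2) as [Hc0 U0].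
  destruct (U _ _ _ Hc0) as [v [[v1N v1E] [[v2N v2E] _]]].
  destruct (U0 _ _ _ Hc) as [u [[u1N u1E] [[u2N u2E] _]]].
  destruct (U _ _ _ Hc) as [w [_ [_ wU]]].
  assert (Hvu : heq F G (hcomp F G v u) (hid F G P)).
  { destruct (wU (hcomp F G v u)) as [a1 a2];
      [split; intro; simpl in *; congruence.. |].
    destruct (wU (hid F G P)) as [b1 b2]; [split; intro; simpl; auto.. |].
    split; intro; simpl in *; congruence. }
  destruct Hvu as [vuN vuE]. simpl in *. destruct Hc as [HcN HcE]; simpl in *.
  split; apply pbs_intro; auto.
  - intros x y e. exists (hN v (exist _ (x, y) e)). rewrite v1N, v2N; auto.
  - intros p q e1 e2. rewrite <- (vuN p), <- (vuN q). f_equal.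
    apply (pbs_unique _ _ _ _ (pb_canon (hN g1) (hN g2))); rewrite ?u1N, ?u2N; auto.
  - intros x y e. exists (hE v (exist _ (x, y) e)). rewrite v1E, v2E; auto.
  - intros p q e1 e2. rewrite <- (vuE p), <- (vuE q). f_equal.
    apply (pbs_unique _ _ _ _ (pb_canon (hE g1) (hE g2))); rewrite ?u1E, ?u2E; auto.
Qed.

Definition POT {A B C : Type} (m : A -> B) (f : A -> C) : Type :=
  (C + {b : B | ~ exists a, m a = b})%type.

Definition gmap {A B C : Type} (m : A -> B) (f : A -> C) (b : B) : POT m f :=
  match excluded_middle_informative (exists a, m a = b) with
  | left H => inl (f (proj1_sig (constructive_indefinite_description _ H)))
  | right H => inr (exist _ b H)
  end.

Lemma gmap_cases {A B C : Type} (m : A -> B) (f : A -> C) (b : B) :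
  (exists a, m a = b /\ gmap m f b = inl (f a)) \/
  (exists H, gmap m f b = inr (exist _ b H)).
Proof.
  unfold gmap. destruct (excluded_middle_informative _) as [H|H].
  - left. destruct (constructive_indefinite_description _ H) as [a e]; simpl. eauto.
  - right. eauto.
Qed.

Lemma gmap_m {A B C : Type} (m : A -> B) (f : A -> C) :
  injective m -> forall a, gmap m f (m a) = inl (f a).
Proof.
  intros im a. destruct (gmap_cases m f (m a)) as [[a' [e ->]]|[H _]].
  - apply im in e; subst; auto.
  - exfalso; apply H; eauto.
Qed.

Lemma po_canon {A B C : Type} (m : A -> B) (f : A -> C) :
  injective m -> POchar m f (gmap m f) inl.
Proof.
  intro im. split; [|split; [|split; [|split]]].
  - intro a; apply gmap_m; auto.
  - intros x y e; injection e; auto.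
  - intros [c|[b H]]; [right; eauto|left; exists b].
    destruct (gmap_cases m f b) as [[a [e _]]|[H' ->]].
    + exfalso; apply H; eauto.
    + do 2 f_equal; apply proof_irrelevance.
  - intros b c e. destruct (gmap_cases m f b) as [[a [e1 e2]]|[H e2]]; rewrite e2 in e.
    + injection e; intros; eauto.
    + discriminate.
  - intros b1 b2 e. destruct (gmap_cases m f b1) as [[a [e1 e2]]|[H e2]].
    + right; eauto.
    + left. rewrite e2 in e.
      destruct (gmap_cases m f b2) as [[a [e1' e2']]|[H' e2']]; rewrite e2' in e.
      * discriminate.
      * injection e; auto.
Qed.

Definition poC (F G : BiFunctor) {A B C : Coalg F G} (m : Hom F G A B) (f : Hom F G A C) : Coalg F G :=
  Build_Coalg F G (POT (hN m) (hN f)) (POT (hE m) (hE f))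
    (fun d => match d with
              | inl c => fmap F inl inl (cmap C c)
              | inr bb => fmap F (gmap (hN m) (hN f)) (gmap (hE m) (hE f)) (cmap B (proj1_sig bb))
              end)
    (fun d => match d with
              | inl c => fmap G inl inl (stmap C c)
              | inr bb => fmap G (gmap (hN m) (hN f)) (gmap (hE m) (hE f)) (stmap B (proj1_sig bb))
              end).

Definition poN (F G : BiFunctor) {A B C : Coalg F G} (m : Hom F G A B) (f : Hom F G A C) :
  Hom F G C (poC F G m f) :=
  Build_Hom F G C (poC F G m f) inl inl (fun _ => eq_refl) (fun _ => eq_refl).

Definition poG (F G : BiFunctor) {A B C : Coalg F G} (m : Hom F G A B) (f : Hom F G A C)
  (i1 : injective (hN m)) (i2 : injective (hE m)) : Hom F G B (poC F G m f).
Proof.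
  refine (Build_Hom F G B (poC F G m f) (gmap (hN m) (hN f)) (gmap (hE m) (hE f)) _ _).
  - intro b. destruct (gmap_cases (hN m) (hN f) b) as [[a [<- ->]]|[H ->]]; simpl; auto.
    rewrite <- (hom_c m), <- (hom_c f).
    rewrite (fmap_ce _ (hN m) (hE m) (gmap (hN m) (hN f)) (gmap (hE m) (hE f))
      (fun x => inl (hN f x)) (fun x => inl (hE f x))) by (intros; apply gmap_m; auto).
    rewrite (fmap_ce _ (hN f) (hE f) inl inl
      (fun x => inl (hN f x)) (fun x => inl (hE f x))) by auto.
    reflexivity.
  - intro b. destruct (gmap_cases (hE m) (hE f) b) as [[a [<- ->]]|[H ->]]; simpl; auto.
    rewrite <- (hom_st m), <- (hom_st f).
    rewrite (fmap_ce _ (hN m) (hE m) (gmap (hN m) (hN f)) (gmap (hE m) (hE f))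
      (fun x => inl (hN f x)) (fun x => inl (hE f x))) by (intros; apply gmap_m; auto).
    rewrite (fmap_ce _ (hN f) (hE f) inl inl
      (fun x => inl (hN f x)) (fun x => inl (hE f x))) by auto.
    reflexivity.
Defined.

Lemma coalg_po_of_char (F G : BiFunctor) {A B C D : Coalg F G}
  (m : Hom F G A B) (f : Hom F G A C) (g : Hom F G B D) (n : Hom F G C D) :
  POchar (hN m) (hN f) (hN g) (hN n) -> POchar (hE m) (hE f) (hE g) (hE n) ->
  isPushout F G m f g n.
Proof.
  intros PN PE. split.
  - split; intro; simpl; [apply (proj1 PN) | apply (proj1 PE)].
  - intros Q u v [HN HE]; simpl in HN, HE.
    destruct (po_factor _ _ _ _ (hN u) (hN v) PN HN) as [wN [w1 w2]].
    destruct (po_factor _ _ _ _ (hE u) (hE v) PE HE) as [wE [z1 z2]].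
    assert (hc : forall x, fmap F wN wE (cmap D x) = cmap Q (wN x)).
    { intro x. destruct (proj1 (proj2 (proj2 PN)) x) as [[b <-]|[c <-]].
      - rewrite <- (hom_c g). rewrite fmap_ce with (h := hN u) (k := hE u) by auto.
        rewrite (hom_c u), w1; auto.
      - rewrite <- (hom_c n). rewrite fmap_ce with (h := hN v) (k := hE v) by auto.
        rewrite (hom_c v), w2; auto. }
    assert (hs : forall x, fmap G wN wE (stmap D x) = stmap Q (wE x)).
    { intro x. destruct (proj1 (proj2 (proj2 PE)) x) as [[b <-]|[c <-]].
      - rewrite <- (hom_st g). rewrite fmap_ce with (h := hN u) (k := hE u) by auto.
        rewrite (hom_st u), z1; auto.
      - rewrite <- (hom_st n). rewrite fmap_ce with (h := hN v) (k := hE v) by auto.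
        rewrite (hom_st v), z2; auto. }
    exists (Build_Hom F G D Q wN wE hc hs). split; [|split].
    + split; simpl; auto.
    + split; simpl; auto.
    + intros w' [a1 a2] [b1 b2]; simpl in *. split.
      * apply (po_unique _ _ _ _ _ _ PN); intros; rewrite ?a1, ?b1, ?w1, ?w2; auto.
      * apply (po_unique _ _ _ _ _ _ PE); intros; rewrite ?a2, ?b2, ?z1, ?z2; auto.
Qed.

Lemma po_transfer {A B C D D0 : Type} (m : A -> B) (f : A -> C) (g : B -> D) (n : C -> D)
  (g0 : B -> D0) (n0 : C -> D0) (phi : D -> D0) (psi : D0 -> D) :
  POchar m f g0 n0 -> (forall a, g (m a) = n (f a)) ->
  (forall b, phi (g b) = g0 b) -> (forall c, phi (n c) = n0 c) ->
  (forall d, psi (phi d) = d) -> POchar m f g n.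
Proof.
  intros [Hc [Hn [Hs [HP HQ]]]] Hc' e1 e2 e3.
  split; [auto|split; [|split; [|split]]].
  - intros c1 c2 e. apply Hn. rewrite <- !e2, e; auto.
  - intro d. rewrite <- (e3 d). destruct (Hs (phi d)) as [[b <-]|[c <-]].
    + left; exists b. rewrite <- e1, e3; auto.
    + right; exists c. rewrite <- e2, e3; auto.
  - intros b c e. apply HP. rewrite <- e1, <- e2, e; auto.
  - intros b1 b2 e. destruct (HQ b1 b2) as [?|[c ec]]; [rewrite <- !e1, e; auto| auto |].
    right; exists c. rewrite <- (e3 (g b1)), <- (e3 (n c)), e1, e2, ec; auto.
Qed.

Lemma char_of_coalg_po (F G : BiFunctor) {A B C D : Coalg F G}
  (m : Hom F G A B) (f : Hom F G A C) (g : Hom F G B D) (n : Hom F G C D) :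
  injective (hN m) -> injective (hE m) -> isPushout F G m f g n ->
  POchar (hN m) (hN f) (hN g) (hN n) /\ POchar (hE m) (hE f) (hE g) (hE n).
Proof.
  intros i1 i2 [Hc U].
  assert (PO0 : isPushout F G m f (poG F G m f i1 i2) (poN F G m f)).
  { apply coalg_po_of_char; simpl; apply po_canon; auto. }
  destruct PO0 as [Hc0 U0].
  destruct (U _ _ _ Hc0) as [phi [[p1N p1E] [[p2N p2E] _]]].
  destruct (U0 _ _ _ Hc) as [psi [[s1N s1E] [[s2N s2E] _]]].
  destruct (U _ _ _ Hc) as [w [_ [_ wU]]].
  assert (Hvu : heq F G (hcomp F G psi phi) (hid F G D)).
  { destruct (wU (hcomp F G psi phi)) as [a1 a2];
      [split; intro; simpl in *; congruence.. |].
    destruct (wU (hid F G D)) as [b1 b2]; [split; intro; simpl; auto.. |].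
    split; intro; simpl in *; congruence. }
  destruct Hvu as [vuN vuE]. simpl in *. destruct Hc as [HcN HcE]; simpl in *.
  split.
  - eapply (po_transfer _ _ _ _ _ _ (hN phi) (hN psi) (po_canon _ _ i1)); eauto.
  - eapply (po_transfer _ _ _ _ _ _ (hE phi) (hE psi) (po_canon _ _ i2)); eauto.
Qed.

Theorem mainTheorem11 (F G : BiFunctor) :
  preserves_injections F -> preserves_pullbacks_along_injections F ->
  preserves_injections G -> preserves_pullbacks_along_injections G ->
  M_adhesive F G (Minj F G).
Proof.
  intros _ HPF _ HPG.
  unfold M_adhesive, Minj.
  split; [|split; [|split; [|split; [|split; [|split; [|split]]]]]].
  - intros X Y h [i1 i2] Q u v [e1 e2]; simpl in *. split; intro; auto.
  - intro X; split; intros x y e; exact e.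
  - intros X Y Z f g [f1 f2] [g1 g2]; split; intros x y e; simpl in *; auto.
  - intros X Y Z g1 g2 [i1 i2].
    exists (pbC F G HPF HPG g1 g2 i1 i2), (pbP1 F G HPF HPG g1 g2 i1 i2), (pbP2 F G HPF HPG g1 g2 i1 i2).
    apply pbC_pb.
  - intros P X Y Z p1 p2 g1 g2 H [i1 i2].
    destruct (sets_of_coalg_pb F G HPF HPG p1 p2 g1 g2 i1 i2 H) as [PN PE].
    split; intros x y e.
    + apply (pbs_unique _ _ _ _ PN); auto. apply i1.
      rewrite (proj1 PN x), (proj1 PN y), e; auto.
    + apply (pbs_unique _ _ _ _ PE); auto. apply i2.
      rewrite (proj1 PE x), (proj1 PE y), e; auto.
  - intros A B C m f [i1 i2].
    exists (poC F G m f), (poG F G m f i1 i2), (poN F G m f).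
    apply coalg_po_of_char; simpl; apply po_canon; auto.
  - intros A B C D m f g n H [i1 i2].
    destruct (char_of_coalg_po F G m f g n i1 i2 H) as [PN PE].
    split; apply PN || apply PE.
  - intros A B C D m f g n H [i1 i2].
    destruct (char_of_coalg_po F G m f g n i1 i2 H) as [PN PE].
    intros A' B' C' D' m' f' g' n' a b c d [ct1 ct2] [cm1 cm2] [cf1 cf2] [cg1 cg2] [cn1 cn2]
      [ia1 ia2] [ib1 ib2] [ic1 ic2] [id1 id2] PBm PBf.
    simpl in *.
    assert (im1 : injective (hN m')).
    { intros x y e. apply ia1, i1. rewrite <- !cm1, e; auto. }
    assert (im2 : injective (hE m')).
    { intros x y e. apply ia2, i2. rewrite <- !cm2, e; auto. }
    destruct (sets_of_coalg_pb F G HPF HPG _ _ _ _ ib1 ib2 PBm) as [BmN BmE].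
    destruct (sets_of_coalg_pb F G HPF HPG _ _ _ _ ic1 ic2 PBf) as [BfN BfE].
    pose proof (vk_set (hN m) (hN f) (hN g) (hN n) (hN m') (hN f') (hN g') (hN n')
                  (hN a) (hN b) (hN c) (hN d) PN i1 ct1 cm1 cf1 cg1 cn1 ia1 ib1 ic1 id1 BmN BfN) as VN.
    pose proof (vk_set (hE m) (hE f) (hE g) (hE n) (hE m') (hE f') (hE g') (hE n')
                  (hE a) (hE b) (hE c) (hE d) PE i2 ct2 cm2 cf2 cg2 cn2 ia2 ib2 ic2 id2 BmE BfE) as VE.
    split.
    + intro HT. destruct (char_of_coalg_po F G _ _ _ _ im1 im2 HT) as [TN TE].
      apply VN in TN as [G1 N1]. apply VE in TE as [G2 N2].
      split; apply coalg_pb_of_sets; auto.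
    + intros [Hg Hn].
      destruct (sets_of_coalg_pb F G HPF HPG _ _ _ _ id1 id2 Hg) as [G1 G2].
      destruct (sets_of_coalg_pb F G HPF HPG _ _ _ _ id1 id2 Hn) as [N1 N2].
      apply coalg_po_of_char; [apply VN | apply VE]; auto.
Qed.
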